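(* Let $K$ be a field and $n\ge 2$. If $\{\alpha_i\in\mathbb{M}(K^n) : 1\le i\le m\}$ is a collection of M-flags in general position with $m\ge 2n-1$, then no $\alpha\in\mathbb{M}(K^n)$ touches all of the M-flags $\alpha_1,\dots,\alpha_m$ simultaneously.
   Context: An M-flag in $\mathbb{P}(K^n)$ is a pair $\alpha=(\overline{H}^{+},\overline{v}^{-})$ where $\overline{H}^{+}\subset\mathbb{P}(K^n)$ is a projective hyperplane and $\overline{v}^{-}\in\overline{H}^{+}$ is a point; $\mathbb{M}(K^n)$ denotes the set of all M-flags. Two M-flags $\alpha_1=(\overline{H}^+_1,\overline{v}^-_1)$, $\alpha_2=(\overline{H}^+_2,\overline{v}^-_2)$ touch each other if $\overline{v}^-_1\in\overline{H}^+_2$ or $\overline{v}^-_2\in\overline{H}^+_1$. A collection $\{\alpha_i=(\overline{H}^+_i,\overline{v}^-_i) : i\in I\}$ is in general position if for every $J\subset I$ with $|J|=n$: (a) $\bigcap_{j\in J}\overline{H}^+_j=\emptyset$, and (b) the points $\overline{v}^-_j$, $j\in J$, span all of $\mathbb{P}(K^n)$ (i.e. the corresponding vectors span $K^n$). *)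

(* Defs.v *)
From mathcomp Require Import all_boot all_order all_algebra.
Set Implicit Arguments. Unset Strict Implicit. Unset Printing Implicit Defensive.
Import GRing.Theory.
Local Open Scope ring_scope.

(* Points of P(K^n) are represented by nonzero vectors of K^n (row vectors),
   projective hyperplanes by nonzero linear functionals, also stored as row
   vectors h; the hyperplane is {[w] | h . w = 0}.  All notions below are
   invariant under rescaling of representatives. *)

Definition pairing (K : fieldType) (n : nat) (h w : 'rV[K]_n) : K :=
  \sum_(k < n) h 0 k * w 0 k.

Definition incid (K : fieldType) (n : nat) (h w : 'rV[K]_n) : Prop :=
  pairing h w = 0.

Record Mflag (K : fieldType) (n : nat) := MFlag {
  mf_H : 'rV[K]_n;
  mf_v : 'rV[K]_n;
  mf_H_nz : mf_H != 0;
  mf_v_nz : mf_v != 0;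
  mf_inc : incid mf_H mf_v }.

Definition touches (K : fieldType) (n : nat) (a b : Mflag K n) : Prop :=
  incid (mf_H b) (mf_v a) \/ incid (mf_H a) (mf_v b).

Definition general_position (K : fieldType) (n : nat) (I : finType)
    (a : I -> Mflag K n) : Prop :=
  forall J : {set I}, #|J| = n ->
    (~ exists w : 'rV[K]_n, w != 0 /\ forall j, j \in J -> incid (mf_H (a j)) w)
    /\
    \rank (\sum_(j in J) <<mf_v (a j)>>)%MS = n.

(* Main.v *)
Require Import Defs.
From mathcomp Require Import all_boot all_order all_algebra.
From mathcomp Require Import zify.
Import GRing.Theory.
Local Open Scope ring_scope.

Lemma sub_card_ex (T : finType) (A : {set T}) (k : nat) :
  (k <= #|A|)%N -> exists J : {set T}, J \subset A /\ #|J| = k.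
Proof.
elim: k => [|k IH] hk; first by exists set0; rewrite sub0set cards0.
have [J [JA cJ]] := IH (ltnW hk).
have : (0 < #|A :\: J|)%N by rewrite cardsDS // cJ; lia.
case/card_gt0P => x; rewrite inE => /andP [xJ xA].
exists (x |: J); split; first by rewrite subUset sub1set xA.
by rewrite cardsU1 xJ cJ.
Qed.

Lemma rank_in_hyp (K : fieldType) (n : nat) (I : finType) (J : {set I})
   (h : 'rV[K]_n) (v : I -> 'rV[K]_n) : h != 0 ->
   (forall j, j \in J -> pairing h (v j) = 0) ->
   (\rank (\sum_(j in J) <<v j>>)%MS < n)%N.
Proof.
move=> hnz hv.
have sub : ((\sum_(j in J) <<v j>>) <= kermx h^T)%MS.
  apply/sumsmx_subP => j jJ; rewrite genmxE; apply/sub_kermxP.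
  apply/matrixP => i k; rewrite !ord1 !mxE.
  rewrite -[RHS](hv j jJ) /pairing.
  by apply: eq_bigr => l _; rewrite mxE mulrC.
have := mxrankS sub; rewrite mxrank_ker mxrank_tr.
have : (\rank h != 0)%N by rewrite mxrank_eq0.
have := rank_leq_row h; have := rank_leq_col h; lia.
Qed.

Theorem mainTheorem7 (K : fieldType) (n m : nat) :
  (2 <= n)%N -> (2 * n - 1 <= m)%N ->
  forall a : 'I_m -> Mflag K n,
    general_position a ->
    ~ exists alpha : Mflag K n, forall i : 'I_m, touches alpha (a i).
Proof.
move=> n2 hm a gp [alpha hal].
set A := [set i | pairing (mf_H (a i)) (mf_v alpha) == 0].
set B := [set i | pairing (mf_H alpha) (mf_v (a i)) == 0].
have AB : A :|: B = setT.
  apply/setP => i; rewrite !inE; case: (hal i) => /eqP -> //; by rewrite orbT.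
have := leq_card_setU A B; rewrite AB cardsT card_ord => [[hle _]].
have [hA | hB] : (n <= #|A| \/ n <= #|B|)%N by lia.
- have [J [JA cJ]] := sub_card_ex _ _ _ hA.
  have [ga _] := gp J cJ; apply: ga.
  exists (mf_v alpha); split; first exact: mf_v_nz.
  by move=> j /(subsetP JA); rewrite inE => /eqP.
- have [J [JB cJ]] := sub_card_ex _ _ _ hB.
  have [_ gb] := gp J cJ.
  have := @rank_in_hyp K n _ J (mf_H alpha) (fun j => mf_v (a j)) (mf_H_nz alpha).
  rewrite gb ltnn => H; suff: false by []; apply: H.
  by move=> j /(subsetP JB); rewrite inE => /eqP.
Qed.
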